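(* Let $\pi$ be a model with data space $Y$ and parameter space $\Theta$, $f$ a test quantity and $\phi$ a posterior family such that neither $\pi$ nor $\phi$ has ties with respect to $f$. Then $\phi$ passes continuous SBC with respect to $f$ if and only if for all $x\in[0,1]$ $$\int_Y\int_\Theta \mathbb{I}\Big[\int_\Theta \mathbb{I}[f(\theta,y)<f(\tilde\theta,y)]\,\phi(\theta\mid y)\,\mathrm{d}\theta\le x\Big]\,\pi_{\text{obs}}(y\mid\tilde\theta)\pi_{\text{prior}}(\tilde\theta)\,\mathrm{d}\tilde\theta\,\mathrm{d}y=x.$$
   Context: Model $\pi$: prior density $\pi_{\text{prior}}(\theta)$ on $\Theta$, observation density $\pi_{\text{obs}}(y\mid\theta)$ on $Y$, $\pi_{\text{marg}}(y)=\int_\Theta\pi_{\text{obs}}(y\mid\theta)\pi_{\text{prior}}(\theta)\,\mathrm{d}\theta$, $\pi_{\text{post}}(\theta\mid y)=\pi_{\text{obs}}(y\mid\theta)\pi_{\text{prior}}(\theta)/\pi_{\text{marg}}(y)$. A posterior family is $\phi:\Theta\times Y\to\mathbb{R}^+$ with $\int_\Theta\phi(\theta\mid y)\,\mathrm{d}\theta=1$ for all $y$; a test quantity is a measurable $f:\Theta\times Y\to\mathbb{R}$. $C_{\phi,f}(s\mid y)=\int_\Theta\mathbb{I}[f(\theta,y)\le s]\phi(\theta\mid y)\,\mathrm{d}\theta$, $D_{\phi,f}(s\mid y)=\int_\Theta\mathbb{I}[f(\theta,y)=s]\phi(\theta\mid y)\,\mathrm{d}\theta$, $D_f(s\mid y)=\int_\Theta\mathbb{I}[f(\theta,y)=s]\pi_{\text{post}}(\theta\mid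 y)\,\mathrm{d}\theta$. $\pi$ has ties w.r.t. $f$ if $D_f(f(\tilde\theta,y)\mid y)>0$ for some $y,\tilde\theta$; $\phi$ has ties w.r.t. $f$ if $D_{\phi,f}(f(\tilde\theta,y)\mid y)>0$ for some $y,\tilde\theta$. With $U\sim\mathrm{uniform}[0,1]$, $r_{\phi,f}(x\mid\tilde\theta,y)=\Pr\big(C_{\phi,f}(f(\tilde\theta,y)\mid y)-U\,D_{\phi,f}(f(\tilde\theta,y)\mid y)\le x\big)$, $q_{\phi,f}(x\mid y)=\int_\Theta\pi_{\text{post}}(\tilde\theta\mid y)r_{\phi,f}(x\mid\tilde\theta,y)\,\mathrm{d}\tilde\theta$. $\phi$ passes continuous SBC w.r.t. $f$ if $\int_Yq_{\phi,f}(x\mid y)\pi_{\text{marg}}(y)\,\mathrm{d}y=x$ for all $x\in[0,1]$. *)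

(* Defs.v *)
From HB Require Import structures.
From mathcomp Require Import all_boot all_order all_algebra.
From mathcomp Require Import all_classical all_reals all_analysis.
Set Implicit Arguments. Unset Strict Implicit. Unset Printing Implicit Defensive.
Import Order.TTheory GRing.Theory Num.Theory.
Local Open Scope classical_set_scope.
Local Open Scope ring_scope.
Local Open Scope ereal_scope.

Section SBC.
Context (R : realType) (d1 d2 : measure_display)
  (Theta : measurableType d1) (Y : measurableType d2)
  (muT : {measure set Theta -> \bar R}) (muY : {measure set Y -> \bar R}).

(* prior : pi_prior(theta);  obs y th : pi_obs(y | th) *)
Variables (prior : Theta -> R) (obs : Y -> Theta -> R).

Definition marg (y : Y) : \bar R :=
  \int[muT]_th ((obs y th * prior th)%R)%:E.

(* pi_post(th | y) ; division by 0 gives 0 in mathcomp *)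
Definition post (th : Theta) (y : Y) : R :=
  (obs y th * prior th / fine (marg y))%R.

Variables (phi : Theta -> Y -> R) (f : Theta -> Y -> R).

Definition Cphi (s : R) (y : Y) : \bar R :=
  \int[muT]_th ((\1_[set t | (f t y <= s)%R] th * phi th y)%R)%:E.

Definition Dphi (s : R) (y : Y) : \bar R :=
  \int[muT]_th ((\1_[set t | f t y = s] th * phi th y)%R)%:E.

Definition Dpost (s : R) (y : Y) : \bar R :=
  \int[muT]_th ((\1_[set t | f t y = s] th * post th y)%R)%:E.

Definition model_has_ties : Prop :=
  exists (y : Y) (tth : Theta), 0 < Dpost (f tth y) y.

Definition family_has_ties : Prop :=
  exists (y : Y) (tth : Theta), 0 < Dphi (f tth y) y.

(* r_{phi,f}(x | tth, y) = Pr_{U ~ uniform[0,1]}(C - U D <= x) *)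
Definition rphi (x : R) (tth : Theta) (y : Y) : \bar R :=
  (@lebesgue_measure R)
    (`[0%R, 1%R] `&` [set u : R | Cphi (f tth y) y - u%:E * Dphi (f tth y) y <= x%:E]).

Definition qphi (x : R) (y : Y) : \bar R :=
  \int[muT]_tth ((post tth y)%:E * rphi x tth y).

Definition passes_continuous_SBC : Prop :=
  forall x : R, (0 <= x <= 1)%R ->
    \int[muY]_y (qphi x y * marg y) = x%:E.

End SBC.

(* Main.v *)
Require Import Defs.
From HB Require Import structures.
From mathcomp Require Import all_boot all_order all_algebra.
From mathcomp Require Import all_classical all_reals all_analysis.
From mathcomp Require Import measurable_realfun.
From mathcomp Require Import ring.
Import Order.TTheory GRing.Theory Num.Theory.
Local Open Scope classical_set_scope.
Local Open Scope ring_scope.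
Local Open Scope ereal_scope.

Definition sfm d (T : measurableType d) (R : realType) (mu : {measure set T -> \bar R})
  (h : sigma_finite setT mu) : set T -> \bar R := mu.
HB.instance Definition _ d (T : measurableType d) (R : realType) (mu : {measure set T -> \bar R}) (h : sigma_finite setT mu) := Measure.on (@sfm d T R mu h).
HB.instance Definition _ d (T : measurableType d) (R : realType) (mu : {measure set T -> \bar R}) (h : sigma_finite setT mu) := Measure_isSigmaFinite.Build _ _ _ (@sfm d T R mu h) h.

Lemma indic_sec (A B : Type) (R : realType) (P : A -> B -> Prop) a b :
  \1_[set t | P t b] a = \1_[set p | P p.1 p.2] (a, b) :> R.
Proof. by []. Qed.
Lemma memb (T : Type) (P : T -> bool) x : (x \in [set y | P y]) = P x.
Proof. by apply/idP/idP; rewrite inE. Qed.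
Lemma meme (T : Type) (U : eqType) (a : T -> U) b x : (x \in [set y | a y = b]) = (a x == b).
Proof. by apply/idP/eqP; rewrite inE. Qed.

Section Main.
Context (R : realType) (d1 d2 : measure_display)
  (Theta : measurableType d1) (Y : measurableType d2)
  (muT : {measure set Theta -> \bar R}) (muY : {measure set Y -> \bar R})
  (prior : Theta -> R) (obs : Y -> Theta -> R)
  (phi : Theta -> Y -> R) (f : Theta -> Y -> R).
Hypotheses (sfT : sigma_finite setT muT) (sfY : sigma_finite setT muY)
  (mprior : measurable_fun setT prior) (prior0 : forall th, (0 <= prior th)%R)
  (mobs : measurable_fun setT (fun p : Theta * Y => obs p.2 p.1))
  (obs0 : forall y th, (0 <= obs y th)%R)
  (obs1 : forall th, \int[muY]_y (obs y th)%:E = 1)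
  (mphi : measurable_fun setT (fun p : Theta * Y => phi p.1 p.2))
  (phi0 : forall th y, (0 <= phi th y)%R)
  (mf : measurable_fun setT (fun p : Theta * Y => f p.1 p.2)).

Notation muTs := (@sfm _ _ _ muT sfT).
Notation muYs := (@sfm _ _ _ muY sfY).

Lemma mf_at y : measurable_fun setT (fun t => f t y).
Proof. exact: (measurableT_comp mf (pair2_measurable y)). Qed.

Lemma mphi_at y : measurable_fun setT (fun t => phi t y).
Proof. exact: (measurableT_comp mphi (pair2_measurable y)). Qed.

Lemma mobs_at y : measurable_fun setT (fun t => obs y t).
Proof. exact: (measurableT_comp mobs (pair2_measurable y)). Qed.

Lemma mobs_at2 t : measurable_fun setT (fun y => obs y t).
Proof. exact: (measurableT_comp mobs (pair1_measurable t)). Qed.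

Lemma measurable_ltset d (T : measurableType d) (a b : T -> R) :
  measurable_fun setT a -> measurable_fun setT b -> measurable [set x | (a x < b x)%R].
Proof.
move=> ma mb; have := measurable_fun_ltr ma mb measurableT (Y:=[set true]).
by rewrite setTI; apply.
Qed.

Definition Cs (p : Theta * Y) : \bar R :=
  \int[muT]_s ((\1_[set s | (f s p.2 < f p.1 p.2)%R] s * phi s p.2)%R)%:E.

Lemma mCs : measurable_fun setT Cs.
Proof.
pose F := fun q : Theta * (Theta * Y) =>
  ((\1_[set q | (f q.1 q.2.2 < f q.2.1 q.2.2)%R] q * phi q.1 q.2.2)%R)%:E.
have mp : measurable_fun setT (fun q : Theta * (Theta * Y) => (q.1, q.2.2)).
  apply: measurable_fun_pair => //.
  exact: (measurableT_comp measurable_snd measurable_snd).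
have mF : measurable_fun setT F.
  apply/measurable_EFinP; apply: measurable_funM.
    apply: measurable_indic; apply: measurable_ltset.
      exact: (measurableT_comp mf mp).
    exact: (measurableT_comp mf measurable_snd).
  exact: (measurableT_comp mphi mp).
have F0 q : 0 <= F q by rewrite lee_fin mulr_ge0.
have -> : Cs = fubini_G muTs F by [].
exact: (@measurable_fun_fubini_tonelli_G _ _ _ _ _ muTs F mF F0).
Qed.

Definition Gx (x : R) (p : Theta * Y) : R := \1_[set p | Cs p <= x%:E] p.

Lemma mG x : measurable_fun setT (Gx x).
Proof.
apply: measurable_indic.
have := measurable_fun_lee mCs (measurable_cst x%:E) measurableT (Y:=[set true]).
by rewrite setTI; apply.
Qed.

Lemma mOP : measurable_fun setT (fun p : Theta * Y => (obs p.2 p.1 * prior p.1)%R).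
Proof. apply: measurable_funM => //; exact: (measurableT_comp mprior measurable_fst). Qed.

Definition RHSf (x : R) (y : Y) : \bar R :=
  \int[muT]_t ((Gx x (t, y) * (obs y t * prior t))%R)%:E.

Lemma mRHS x : measurable_fun setT (RHSf x).
Proof.
pose F := fun p : Theta * Y => ((Gx x p * (obs p.2 p.1 * prior p.1))%R)%:E.
have mF : measurable_fun setT F.
  by apply/measurable_EFinP; apply: measurable_funM; [exact: mG|exact: mOP].
have F0 p : 0 <= F p by rewrite lee_fin mulr_ge0 ?mulr_ge0.
have -> : RHSf x = fubini_G muTs F by [].
exact: (@measurable_fun_fubini_tonelli_G _ _ _ _ _ muTs F mF F0).
Qed.

Lemma mmarg : measurable_fun setT (marg muT prior obs).
Proof.
pose F := fun p : Theta * Y => ((obs p.2 p.1 * prior p.1)%R)%:E.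
have mF : measurable_fun setT F by apply/measurable_EFinP; exact: mOP.
have F0 p : 0 <= F p by rewrite lee_fin mulr_ge0.
have -> : marg muT prior obs = fubini_G muTs F by [].
exact: (@measurable_fun_fubini_tonelli_G _ _ _ _ _ muTs F mF F0).
Qed.

Lemma marg0 y : 0 <= marg muT prior obs y.
Proof. by apply: integral_ge0 => t _; rewrite lee_fin mulr_ge0. Qed.

Lemma int_marg (pr1 : \int[muT]_th (prior th)%:E = 1) :
  \int[muY]_y marg muT prior obs y = 1.
Proof.
pose F := fun p : Theta * Y => ((obs p.2 p.1 * prior p.1)%R)%:E.
have mF : measurable_fun setT F by apply/measurable_EFinP; exact: mOP.
have F0 p : 0 <= F p by rewrite lee_fin mulr_ge0.
have := (@fubini_tonelli _ _ _ _ _ muTs muYs F mF F0).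
rewrite /= => <-; rewrite -pr1; apply: eq_integral => t _.
rewrite /F /=.
under eq_integral do rewrite EFinM.
rewrite ge0_integralZr //.
- by rewrite obs1 mul1e.
- by apply/measurable_EFinP; exact: mobs_at2.
- by move=> y _; rewrite lee_fin.
- by rewrite lee_fin.
Qed.

Lemma marg_ae (pr1 : \int[muT]_th (prior th)%:E = 1) :
  {ae muY, forall y, setT y -> marg muT prior obs y \is a fin_num}.
Proof.
apply: integrable_ae => //; apply/integrableP; split; first exact: mmarg.
under eq_integral do rewrite gee0_abs ?marg0//.
by rewrite int_marg // ltey.
Qed.

Lemma Cphi_eq t y : Dphi muT phi f (f t y) y = 0 -> Cphi muT phi f (f t y) y = Cs (t, y).
Proof.
move=> hD; rewrite /Cphi -[RHS]adde0 -hD /Cs /Dphi /=.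
have m1 : measurable [set s | (f s y < f t y)%R].
  exact: measurable_ltset (mf_at y) (measurable_cst _).
have m2 : measurable [set s | f s y = f t y].
  rewrite [X in measurable X](_ : _ = setT `&` (fun s => f s y) @^-1` [set f t y]).
    by apply: mf_at => //; exact: measurable_set1.
  by rewrite setTI.
rewrite -ge0_integralD //; last 4 first.
- by move=> s _; rewrite lee_fin mulr_ge0.
- apply/measurable_EFinP; apply: measurable_funM; last exact: mphi_at.
  exact: measurable_indic.
- by move=> s _; rewrite lee_fin mulr_ge0.
- apply/measurable_EFinP; apply: measurable_funM; last exact: mphi_at.
  exact: measurable_indic.
apply: eq_integral => s _; rewrite -EFinD -mulrDl !indicE !memb meme.
by have [h|h|h] := ltgtP (f s y) (f t y); rewrite ?addr0 ?add0r.
Qed.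

Lemma rphiE x t y : Dphi muT phi f (f t y) y = 0 ->
  rphi muT phi f x t y = (Gx x (t, y))%:E.
Proof.
move=> hD; rewrite /rphi hD (Cphi_eq t y hD).
rewrite (_ : [set u : R | _] = [set u : R | Cs (t, y) <= x%:E]); last first.
  by apply/seteqP; split => u /=; rewrite mulr0 oppr0 adde0.
rewrite /Gx indicE memb; have [h|h] := pselect (Cs (t, y) <= x%:E).
- rewrite (_ : [set u : R | Cs (t, y) <= x%:E] = setT); last first.
    by apply/seteqP; split => u // _.
  by rewrite setIT lebesgue_measure_itv /= lte_fin ltr01 sube0 h.
- rewrite (_ : [set u : R | Cs (t, y) <= x%:E] = set0); last first.
    by apply/seteqP; split => u //= h'.
  by move/negP: h => h; rewrite setI0 measure0 (negbTE h).
Qed.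

Lemma Gx_le1 x p : (Gx x p <= 1)%R.
Proof. by rewrite /Gx indicE; case: (_ \in _). Qed.

Lemma Gx_ge0 x p : (0 <= Gx x p)%R.
Proof. by rewrite /Gx indicE; case: (_ \in _). Qed.

Lemma key x y (hD : forall t, Dphi muT phi f (f t y) y = 0)
  (hm : marg muT prior obs y \is a fin_num) :
  qphi muT prior obs phi f x y * marg muT prior obs y = RHSf x y.
Proof.
have mGt : measurable_fun setT (fun t => Gx x (t, y)).
  exact: (measurableT_comp (mG x) (pair2_measurable y)).
have mOPt : measurable_fun setT (fun t => (obs y t * prior t)%R).
  exact: (measurableT_comp mOP (pair2_measurable y)).
rewrite /qphi.
under eq_integral do rewrite rphiE // -EFinM.
have mr : marg muT prior obs y = (fine (marg muT prior obs y))%:E by rewrite fineK.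
rewrite -(fineK hm); set r := fine (marg muT prior obs y).
have r0 : (0 <= r)%R by rewrite /r fine_ge0 // marg0.
have [r00|rn0] := eqVneq r 0%R.
  rewrite r00 mule0; apply/eqP; rewrite eq_le; apply/andP; split.
    by apply: integral_ge0 => t _; rewrite lee_fin mulr_ge0 ?Gx_ge0 ?mulr_ge0.
  apply: (@le_trans _ _ (marg muT prior obs y)); last by rewrite mr -/r r00.
  apply: ge0_le_integral => //.
  - by move=> t _; rewrite lee_fin mulr_ge0 ?Gx_ge0 ?mulr_ge0.
  - by apply/measurable_EFinP; exact: measurable_funM.
  - by apply/measurable_EFinP; exact: mOPt.
  - by move=> t _; rewrite lee_fin ler_piMl ?mulr_ge0 ?Gx_le1.
rewrite -ge0_integralZr //.
all: try (by move=> t _; rewrite lee_fin mulr_ge0 ?Gx_ge0 ?mulr_ge0 ?invr_ge0).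
all: try (by rewrite lee_fin).
2: apply/measurable_EFinP; apply: measurable_funM => //.
2: by apply: measurable_funM => //; exact: measurable_cst.
apply: eq_integral => t _; rewrite -EFinM; congr EFin.
rewrite /post -/r; field.
exact: rn0.
Qed.

End Main.

Theorem mainTheorem13 (R : realType) (d1 d2 : measure_display)
  (Theta : measurableType d1) (Y : measurableType d2)
  (muT : {measure set Theta -> \bar R}) (muY : {measure set Y -> \bar R})
  (prior : Theta -> R) (obs : Y -> Theta -> R)
  (phi : Theta -> Y -> R) (f : Theta -> Y -> R) :
  sigma_finite setT muT -> sigma_finite setT muY ->
  (* prior density *)
  measurable_fun setT prior -> (forall th, (0 <= prior th)%R) ->
  \int[muT]_th (prior th)%:E = 1 ->
  (* observation density *)
  measurable_fun setT (fun p : Theta * Y => obs p.2 p.1) ->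
  (forall y th, (0 <= obs y th)%R) ->
  (forall th, \int[muY]_y (obs y th)%:E = 1) ->
  (* posterior family *)
  measurable_fun setT (fun p : Theta * Y => phi p.1 p.2) ->
  (forall th y, (0 <= phi th y)%R) ->
  (forall y, \int[muT]_th (phi th y)%:E = 1) ->
  (* test quantity *)
  measurable_fun setT (fun p : Theta * Y => f p.1 p.2) ->
  (* no ties *)
  ~ model_has_ties muT prior obs f ->
  ~ family_has_ties muT phi f ->
  (passes_continuous_SBC muT muY prior obs phi f <->
   forall x : R, (0 <= x <= 1)%R ->
     \int[muY]_y \int[muT]_tth
        ((\1_[set t | (\int[muT]_th
                ((\1_[set s | (f s y < f t y)%R] th * phi th y)%R)%:E <= x%:E)%E] tth
          * (obs y tth * prior tth))%R)%:E
     = x%:E).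
Proof.
move=> sfT sfY mprior prior0 pr1 mobs obs0 obs1 mphi phi0 phi1 mf _ nophi.
have K := @key R d1 d2 Theta Y muT prior obs phi f sfT mprior prior0 mobs obs0 mphi phi0 mf.
have MR := @mRHS R d1 d2 Theta Y muT prior obs phi f sfT mprior prior0 mobs obs0 mphi phi0 mf.
have MM := @mmarg R d1 d2 Theta Y muT prior obs sfT mprior prior0 mobs obs0.
have M0 := @marg0 R d1 d2 Theta Y muT prior obs prior0 obs0.
have AE := @marg_ae R d1 d2 Theta Y muT muY prior obs sfT sfY mprior prior0 mobs obs0 obs1 pr1.
have hD y t : Dphi muT phi f (f t y) y = 0.
  apply/eqP; rewrite eq_le; apply/andP; split.
    rewrite leNgt; apply/negP => h; apply: nophi; by exists y, t.
  by apply: integral_ge0 => s _; rewrite lee_fin mulr_ge0 // indicE; case: (_ \in _).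
have eqx x : \int[muY]_y (qphi muT prior obs phi f x y * marg muT prior obs y)
    = \int[muY]_y RHSf R d1 d2 Theta Y muT prior obs phi f x y.
  have mS : measurable [set y | marg muT prior obs y < +oo].
    have := measurable_lte (@measurableT _ Y) MM (measurable_cst +oo).
    by rewrite setTI.
  transitivity (\int[muY]_y ((\1_[set y | (marg muT prior obs y < +oo)%E] y)%:E
                   * RHSf R d1 d2 Theta Y muT prior obs phi f x y)).
    apply: eq_integral => y _; rewrite indicE memb.
    have m0 := M0 y.
    have [h|h] := boolP (marg muT prior obs y < +oo).
      by rewrite mul1e K // ge0_fin_numE.
    rewrite mul0e.
    have minf : marg muT prior obs y = +oo.
      by move: h; rewrite ltey negbK => /eqP.
    rewrite /qphi /post minf /=.
    under eq_integral do rewrite invr0 mulr0 mul0e.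
    by rewrite integral0 mul0e.
  apply: ge0_ae_eq_integral => //.
  - apply: emeasurable_funM; last exact: MR.
    by apply/measurable_EFinP; exact: measurable_indic.
  - move=> y _; apply: mule_ge0.
      by rewrite lee_fin indicE; case: (_ \in _).
    by apply: integral_ge0 => t _; rewrite lee_fin !mulr_ge0 ?Gx_ge0.
  - by move=> y _; apply: integral_ge0 => t _; rewrite lee_fin !mulr_ge0 ?Gx_ge0.
  - apply: filterS AE => y hy _.
    by rewrite indicE memb -ge0_fin_numE ?hy ?mul1e.
split => H x hx.
- by have := H x hx; rewrite eqx.
- by rewrite eqx; exact: (H x hx).
Qed.
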